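(* Let $G$ be a connected graph and let $A\subset\mathcal V(G)$ be a set of vertices such that the simple random walk started from any vertex of $G$ a.s. hits $A$ in finite time. For $x\in\mathcal V(G)$ let $X^x$ be the simple random walk started from $x$ and $\tau^x$ the first time $X^x$ hits $A$. Then for $x,y\in\mathcal V(G)\setminus A$, \[ \mathbb d_{\mathrm{TV}}\big(X^x_{\tau^x},X^y_{\tau^y}\big)\leq 1-\mathbb P\big[\text{$X^x$ disconnects $y$ from $A$ before time $\tau^x$}\big], \] where $\mathbb d_{\mathrm{TV}}$ denotes the total variation distance between the laws.
   Context: ''$X^x$ disconnects $y$ from $A$ before time $\tau^x$'' means that every path in $G$ from $y$ to $A$ passes through a vertex visited by $X^x$ during $[0,\tau^x]$. *)

(* Defs.v *)
From HB Require Import structures.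
From mathcomp Require Import all_boot all_order all_algebra.
From mathcomp Require Import all_classical all_reals.
From mathcomp Require Import ereal esum.
Set Implicit Arguments. Unset Strict Implicit. Unset Printing Implicit Defensive.
Import Order.TTheory GRing.Theory Num.Theory.
Local Open Scope classical_set_scope.
Local Open Scope ring_scope.

(** A locally finite simple graph on vertex type [V] is given by its
    neighbour lists [nbr v] (finite, duplicate-free, symmetric, loopless). *)
Definition simple_lf_graph (V : eqType) (nbr : V -> seq V) : Prop :=
  [/\ forall v, uniq (nbr v),
      forall u v, (u \in nbr v) = (v \in nbr u)
    & forall v, v \notin nbr v].

Definition walk (V : eqType) (nbr : V -> seq V) (v : V) (p : seq V) : bool :=
  path (fun a b => b \in nbr a) v p.

Definition connected_graph (V : eqType) (nbr : V -> seq V) : Prop :=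
  forall u w : V, exists p : seq V, walk nbr u p /\ last u p = w.

(** [v :: p] is a trajectory of the walk started at [v] up to and including
    the first hitting time of [A]: every vertex before the last one lies
    outside [A] and the last vertex lies in [A]. *)
Definition hitting_path (V : eqType) (nbr : V -> seq V) (A : set V)
    (v : V) (p : seq V) : Prop :=
  walk nbr v p /\ A (last v p) /\ (forall u, u \in belast v p -> ~ A u).

(** Probability that the simple random walk from [v] follows the finite
    trajectory [v :: p]: product of 1/deg over all steps. *)
Definition srw_weight (R : realType) (V : eqType) (nbr : V -> seq V)
    (v : V) (p : seq V) : R :=
  \prod_(u <- belast v p) (size (nbr u))%:R^-1.

(** Probability of an event [E] determined by the trajectory up to time tau:
    sum of path probabilities over trajectories stopped at tau in [E]. *)
Definition stopped_prob (R : realType) (V : choiceType) (nbr : V -> seq V)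
    (A : set V) (v : V) (E : seq V -> Prop) : \bar R :=
  \esum_(p in [set p | hitting_path nbr A v p /\ E p]) (srw_weight R nbr v p)%:E.

Definition hitting_law (R : realType) (V : choiceType) (nbr : V -> seq V)
    (A : set V) (v : V) (B : set V) : \bar R :=
  stopped_prob R nbr A v (fun p => B (last v p)).

Definition dTV (R : realType) (V : Type) (mu nu : set V -> \bar R) : \bar R :=
  ereal_sup [set (`| mu B - nu B |)%E | B in [set: set V]].

Definition disconnects (V : eqType) (nbr : V -> seq V) (S : V -> Prop)
    (y : V) (A : set V) : Prop :=
  forall w : seq V, walk nbr y w -> A (last y w) ->
    exists2 z, z \in y :: w & S z.

(* Main.v *)
Require Import Defs.
From HB Require Import structures.
From mathcomp Require Import all_boot all_order all_algebra.
From mathcomp Require Import all_classical all_reals.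
From mathcomp Require Import ereal esum.
Import Order.TTheory GRing.Theory Num.Theory.
Local Open Scope classical_set_scope.
Local Open Scope ring_scope.
Set Implicit Arguments. Unset Strict Implicit.
Lemma split_first (V : eqType) (Q : pred V) (v : V) (p : seq V) :
  has Q (v :: p) -> exists p1 p2, p = p1 ++ p2 /\ Q (last v p1) /\
    (forall u, u \in belast v p1 -> ~~ Q u).
Proof.
elim: p v => [|u p IH] v /=.
  by rewrite orbF => Qv; exists [::], [::].
case Qv: (Q v) => /= H.
  by exists [::], (u :: p).
have [p1 [p2 [-> [Ql Hb]]]] := IH u H.
exists (u :: p1), p2; split => //; split => // w.
by rewrite /= inE => /orP[/eqP ->|/Hb]; rewrite ?Qv.
Qed.

Lemma split_uniq (V : eqType) (Q : pred V) (v : V) (p1 p2 q1 q2 : seq V) :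
  Q (last v p1) -> (forall u, u \in belast v p1 -> ~~ Q u) ->
  Q (last v q1) -> (forall u, u \in belast v q1 -> ~~ Q u) ->
  p1 ++ p2 = q1 ++ q2 -> p1 = q1.
Proof.
elim: p1 v q1 => [|u p1 IH] v [|u' q1] //=.
- by move=> Qv _ _ /(_ v); rewrite inE eqxx Qv => /(_ isT).
- by move=> _ /(_ v); rewrite inE eqxx => /(_ isT) /negP.
move=> Ql Hb Ql' Hb' [eu e]; subst u'; congr cons.
apply: (IH u) => // w wi; [apply: Hb | apply: Hb']; by rewrite inE wi orbT.
Qed.

Lemma wt_cat (R : realType) (V : eqType) (nbr : V -> seq V) v p1 p2 :
  srw_weight R nbr v (p1 ++ p2) =
  srw_weight R nbr v p1 * srw_weight R nbr (last v p1) p2.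
Proof. by rewrite /srw_weight belast_cat big_cat. Qed.

Lemma wt_ge0 (R : realType) (V : eqType) (nbr : V -> seq V) v p :
  0 <= srw_weight R nbr v p.
Proof. by rewrite /srw_weight; apply: prodr_ge0 => i _; rewrite invr_ge0 ler0n. Qed.
Arguments split_first {V Q v p}.
Arguments split_uniq {V} Q v {p1 p2 q1 q2}.
Local Open Scope ereal_scope.
Lemma esumZ (R : realType) (T : choiceType) (I : set T) (a : T -> \bar R) (r : R) :
  (forall i, 0 <= a i) -> (0 <= r)%R ->
  \esum_(i in I) (r%:E * a i) = r%:E * \esum_(i in I) a i.
Proof.
move=> a0 r0; rewrite /esum -ereal_supZl//; last first.
  by apply/set0P; exists (\sum_(x \in set0) a x); exists set0 => //; exact: fsets_set0.
congr ereal_sup; apply/seteqP; split => x /= [F FI <-].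
  by exists (\sum_(i \in F) a i); [exists F|rewrite ge0_mule_fsumr].
by move: FI => [X XI <-]; exists X => //; rewrite ge0_mule_fsumr.
Qed.

Lemma esum_subset (R : realType) (T : choiceType) (I J : set T) (a : T -> \bar R) :
  I `<=` J -> (forall i, J i -> 0 <= a i) ->
  \esum_(i in I) a i <= \esum_(i in J) a i.
Proof.
move=> IJ a0; rewrite esum_mkcond [leRHS]esum_mkcond; apply: le_esum => i _.
case: ifPn => iI; first by rewrite ifT // inE; apply: IJ; rewrite -inE.
by case: ifPn => // /[!inE] /a0.
Qed.

Section SP.
End SP.

Lemma sp_ext (R : realType) (V : choiceType) (nbr : V -> seq V) (A : set V) v
  (E1 E2 : seq V -> Prop) :
  (forall p, hitting_path nbr A v p -> (E1 p <-> E2 p)) ->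
  stopped_prob R nbr A v E1 = stopped_prob R nbr A v E2.
Proof.
move=> H; rewrite /stopped_prob; congr esum; apply/seteqP; split => p /= [hp e];
  by split => //; apply/(H p hp).
Qed.

Lemma sp_mono (R : realType) (V : choiceType) (nbr : V -> seq V) (A : set V) v
  (E1 E2 : seq V -> Prop) :
  (forall p, hitting_path nbr A v p -> E1 p -> E2 p) ->
  stopped_prob R nbr A v E1 <= stopped_prob R nbr A v E2.
Proof.
move=> H; apply: esum_subset => [p /= [hp e]|p _]; first by split => //; apply: H.
by rewrite lee_fin wt_ge0.
Qed.

Lemma sp_ge0 (R : realType) (V : choiceType) (nbr : V -> seq V) (A : set V) v
  (E : seq V -> Prop) : 0 <= stopped_prob R nbr A v E.
Proof. by apply: esum_ge0 => p _; rewrite lee_fin wt_ge0. Qed.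

Lemma sp_add (R : realType) (V : choiceType) (nbr : V -> seq V) (A : set V) v
  (E1 E2 : seq V -> Prop) : (forall p, ~ (E1 p /\ E2 p)) ->
  stopped_prob R nbr A v E1 + stopped_prob R nbr A v E2 =
  stopped_prob R nbr A v (fun p => E1 p \/ E2 p).
Proof.
move=> dis; rewrite /stopped_prob esum_mkcond [X in _ + X]esum_mkcond.
rewrite [RHS]esum_mkcond -esumD; last 2 first.
- by move=> p _; case: ifP => //; rewrite lee_fin wt_ge0.
- by move=> p _; case: ifP => //; rewrite lee_fin wt_ge0.
apply: eq_esum => p _.
set S1 := [set _ | _]; set S2 := [set _ | _]; set S3 := [set _ | _].
have [h1|h1] := boolP (p \in S1); have [h2|h2] := boolP (p \in S2);
  have [h3|h3] := boolP (p \in S3); rewrite ?adde0 ?add0e //.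
- by move/set_mem: h1 => [_ e1]; move/set_mem: h2 => [_ e2]; case: (dis p).
- by move/set_mem: h1 => [_ e1]; move/set_mem: h2 => [_ e2]; case: (dis p).
- by move/set_mem: h1 => [hp e1]; case/negP: h3; apply/mem_set; split => //; left.
- by move/set_mem: h2 => [hp e2]; case/negP: h3; apply/mem_set; split => //; right.
- move/set_mem: h3 => [hp [e1|e2]].
    by case/negP: h1; apply/mem_set.
  by case/negP: h2; apply/mem_set.
Qed.
Definition SP (V : eqType) (nbr : V -> seq V) (A : set V) (Q : pred V) (v : V)
  : set (seq V) :=
  [set p1 | walk nbr v p1 /\ Q (last v p1) /\
            (forall u, u \in belast v p1 -> ~ A u /\ ~~ Q u)].
Arguments SP {V}.

Lemma decomp (R : realType) (V : choiceType) (nbr : V -> seq V) (A : set V)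
  (Q : pred V) (B : set V) (v : V) :
  stopped_prob R nbr A v (fun p => has Q (v :: p) /\ B (last v p)) =
  \esum_(p1 in SP nbr A Q v)
     ((srw_weight R nbr v p1)%:E * hitting_law R nbr A (last v p1) B).
Proof.
rewrite /hitting_law /stopped_prob.
set J := fun p1 => [set p2 | hitting_path nbr A (last v p1) p2 /\
                             B (last (last v p1) p2)].
transitivity (\esum_(p1 in SP nbr A Q v) \esum_(p2 in J p1)
   (srw_weight R nbr v p1 * srw_weight R nbr (last v p1) p2)%:E).
2: { apply: eq_esum => p1 _; rewrite -esumZ ?wt_ge0 //.
    by move=> i; rewrite lee_fin wt_ge0. }
rewrite esum_esum; last by move=> i j _ _; rewrite lee_fin mulr_ge0 ?wt_ge0.
transitivity (\esum_(k in SP nbr A Q v `*`` J)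
   (srw_weight R nbr v (k.1 ++ k.2))%:E).
2: by apply: eq_esum => k _; rewrite wt_cat.
rewrite -(esum_image _ (fun k => k.1 ++ k.2) (fun p => (srw_weight R nbr v p)%:E)).
  congr esum; apply/seteqP; split.
    move=> p /= [[wp [Al Hb]] [hQ Bl]].
    have [p1 [p2 [ep [Q1 Hb1]]]] := split_first hQ.
    move: wp Al Hb Bl; rewrite ep /walk cat_path last_cat belast_cat => /andP[w1 w2] Al Hb Bl.
    exists (p1, p2) => //; split => /=.
      split => //; split => // u ub; split; last exact: Hb1.
      by apply: Hb; rewrite mem_cat ub.
    split => //; split => //; split => // u ub; apply: Hb; by rewrite mem_cat ub orbT.
  move=> p [[p1 p2] /= [[w1 [Q1 Hb1]] [[w2 [Al Hb2]] Bl]] <-].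
  rewrite /hitting_path /walk cat_path last_cat belast_cat.
  move: w1 w2; rewrite /walk => -> -> /=.
  split; [split => //; split => // u; rewrite mem_cat => /orP[/Hb1[]|/Hb2] //|].
  split => //; suff : has Q (v :: p1 ++ p2) by [].
  apply/hasP; exists (last v p1) => //.
  by rewrite -cat_cons mem_cat mem_last.
move=> [p1 p2] [q1 q2] /set_mem [[_ [Q1 H1]] _] /set_mem [[_ [Q2 H2]] _] /= e.
have e1 : p1 = q1.
  apply: (split_uniq Q v Q1 _ Q2 _ e) => u ui; [exact: (H1 u ui).2 | exact: (H2 u ui).2].
by subst q1; congr pair; move/eqP: e; rewrite eqseq_cat // eqxx /= => /eqP.
Qed.
Lemma sp_le1 (R : realType) (V : choiceType) (nbr : V -> seq V) (A : set V)
  (Hhit : forall v : V, stopped_prob R nbr A v (fun _ => True) = 1%E) v E :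
  stopped_prob R nbr A v E <= 1.
Proof. by rewrite -(Hhit v); apply: sp_mono. Qed.

Lemma sp_fin (R : realType) (V : choiceType) (nbr : V -> seq V) (A : set V)
  (Hhit : forall v : V, stopped_prob R nbr A v (fun _ => True) = 1%E) v E :
  stopped_prob R nbr A v E = (fine (stopped_prob R nbr A v E))%:E.
Proof.
rewrite fineK // fin_numE; apply/andP; split.
  by apply/eqP => e; have := sp_ge0 R nbr A v E; rewrite e.
by apply/eqP => e; have := sp_le1 Hhit v E; rewrite e.
Qed.

Lemma hl_T (R : realType) (V : choiceType) (nbr : V -> seq V) (A : set V)
  (Hhit : forall v : V, stopped_prob R nbr A v (fun _ => True) = 1%E) u :
  hitting_law R nbr A u setT = 1.
Proof. by rewrite /hitting_law -(Hhit u); apply: sp_ext. Qed.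

Lemma SP_mass (R : realType) (V : choiceType) (nbr : V -> seq V) (A : set V)
  (Hhit : forall v : V, stopped_prob R nbr A v (fun _ => True) = 1%E) Q v :
  \esum_(p1 in SP nbr A Q v) (srw_weight R nbr v p1)%:E =
  stopped_prob R nbr A v (fun p => has Q (v :: p)).
Proof.
have -> : stopped_prob R nbr A v (fun p => has Q (v :: p)) =
  stopped_prob R nbr A v (fun p => has Q (v :: p) /\ setT (last v p)).
  by apply: sp_ext => p _; split => // -[].
rewrite decomp; apply: eq_esum => p _.
by rewrite (hl_T Hhit) mule1.
Qed.

Lemma argmin (V : eqType) (R : realType) (f : V -> \bar R) (z0 : V) (s : seq V) :
  exists2 z, z \in z0 :: s & forall z', z' \in z0 :: s -> f z <= f z'.
Proof.
elim: s z0 => [|u s IH] z0.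
  by exists z0; rewrite ?inE // => z' /[!inE] /eqP ->.
have [z zi zm] := IH u.
have [le|lt] := leP (f z0) (f z).
  exists z0; first by rewrite inE eqxx.
  move=> z'; rewrite inE => /orP[/eqP ->//|/zm]; exact: le_trans.
exists z; first by rewrite inE zi orbT.
move=> z'; rewrite inE => /orP[/eqP ->|/zm//]; exact: ltW.
Qed.
Lemma esum_mulr_cst (R : realType) (T : choiceType) (I : set T) (w : T -> R) (c : \bar R) :
  (forall i, 0 <= w i)%R -> c \is a fin_num -> 0 <= c ->
  \esum_(i in I) ((w i)%:E * c) = c * \esum_(i in I) (w i)%:E.
Proof.
move=> w0 cf c0; rewrite -(fineK cf) -esumZ.
- by apply: eq_esum => i _; rewrite muleC.
- by move=> i; rewrite lee_fin.
- by rewrite -lee_fin fineK.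
Qed.

Lemma min_lemma (R : realType) (V : choiceType) (nbr : V -> seq V) (A : set V)
  (Hhit : forall v : V, stopped_prob R nbr A v (fun _ => True) = 1%E)
  (B : set V) (y z0 : V) (s : seq V) :
  disconnects nbr (fun z => z \in z0 :: s) y A ->
  exists2 z, z \in z0 :: s & hitting_law R nbr A z B <= hitting_law R nbr A y B.
Proof.
move=> dis.
have [z zi zm] := argmin (fun z => hitting_law R nbr A z B) z0 s.
exists z => //.
set S := z0 :: s.
have hasS p : hitting_path nbr A y p -> has (fun z => z \in S) (y :: p).
  move=> [wp [Al _]]; have [u ui uS] := dis p wp Al; by apply/hasP; exists u.
have -> : hitting_law R nbr A y B =
   stopped_prob R nbr A y (fun p => has (fun z => z \in S) (y :: p) /\ B (last y p)).
  by apply: sp_ext => p hp; split => [|[]//]; split => //; exact: hasS.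
rewrite decomp.
have mf : hitting_law R nbr A z B \is a fin_num.
  by rewrite /hitting_law (sp_fin Hhit).
have m0 : 0 <= hitting_law R nbr A z B by apply: sp_ge0.
apply: (@le_trans _ _ (\esum_(p1 in SP nbr A (fun z => z \in S) y)
   ((srw_weight R nbr y p1)%:E * hitting_law R nbr A z B))).
  rewrite esum_mulr_cst //; last exact: wt_ge0.
  rewrite (SP_mass Hhit (fun z => z \in S) y).
  rewrite (_ : stopped_prob _ _ _ _ _ = 1) ?mule1 //.
  rewrite -(Hhit y); apply: sp_ext => p hp; split => // _; exact: hasS.
apply: le_esum => p1 [_ [Ql _]].
by apply: lee_wpmul2l; [rewrite lee_fin wt_ge0 | apply: zm].
Qed.

Lemma key (R : realType) (V : choiceType) (nbr : V -> seq V) (A : set V)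
  (Hhit : forall v : V, stopped_prob R nbr A v (fun _ => True) = 1%E)
  (B : set V) (x y : V) (D : seq V -> Prop) :
  (forall p, hitting_path nbr A x p -> D p ->
     exists2 z, z \in x :: p & hitting_law R nbr A z B <= hitting_law R nbr A y B) ->
  stopped_prob R nbr A x (fun p => B (last x p) /\ D p) <= hitting_law R nbr A y B.
Proof.
move=> HD.
set c := hitting_law R nbr A y B.
set Q : pred V := fun v => (hitting_law R nbr A v B <= c).
apply: (@le_trans _ _
   (stopped_prob R nbr A x (fun p => has Q (x :: p) /\ B (last x p)))).
  apply: sp_mono => p hp [Bl Dp]; split => //.
  by have [z zi zQ] := HD p hp Dp; apply/hasP; exists z.
rewrite decomp.
have cf : c \is a fin_num by rewrite /c /hitting_law (sp_fin Hhit).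
have c0 : 0 <= c by apply: sp_ge0.
apply: (@le_trans _ _ (\esum_(p1 in SP nbr A Q x)
   ((srw_weight R nbr x p1)%:E * c))).
  apply: le_esum => p1 [_ [Ql _]].
  by apply: lee_wpmul2l; [rewrite lee_fin wt_ge0 | apply: Ql].
rewrite esum_mulr_cst //; last exact: wt_ge0.
rewrite (SP_mass Hhit Q x).
rewrite -[leRHS]mule1; apply: lee_wpmul2l => //; exact: sp_le1.
Qed.
From mathcomp Require Import lra.
Lemma arith (R : realType) (a b a' b' d e f e' f' : R) :
  a%:E = e%:E + f%:E -> f%:E + d%:E <= 1 -> e%:E <= b%:E ->
  a'%:E = e'%:E + f'%:E -> f'%:E + d%:E <= 1 -> e'%:E <= b'%:E ->
  a%:E + a'%:E = 1 -> b%:E + b'%:E = 1 ->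
  `|a%:E - b%:E| <= 1 - d%:E.
Proof.
rewrite -!EFinD !lee_fin.
move=> [h1] h2 h3 [h4] h5 h6 [h7] [h8].
rewrite ler_norml; apply/andP; split; lra.
Qed.
Lemma arith_e (R : realType) (a b a' b' d e f e' f' : \bar R) :
  a \is a fin_num -> b \is a fin_num -> a' \is a fin_num -> b' \is a fin_num ->
  d \is a fin_num -> e \is a fin_num -> f \is a fin_num -> e' \is a fin_num ->
  f' \is a fin_num ->
  a = e + f -> f + d <= 1 -> e <= b ->
  a' = e' + f' -> f' + d <= 1 -> e' <= b' ->
  a + a' = 1 -> b + b' = 1 ->
  `|a - b| <= 1 - d.
Proof.
move=> /fineK <- /fineK <- /fineK <- /fineK <- /fineK <- /fineK <- /fineK <-
  /fineK <- /fineK <-.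
exact: arith.
Qed.

Lemma sp_finnum (R : realType) (V : choiceType) (nbr : V -> seq V) (A : set V)
  (Hhit : forall v : V, stopped_prob R nbr A v (fun _ => True) = 1%E) v E :
  stopped_prob R nbr A v E \is a fin_num.
Proof. by rewrite (sp_fin Hhit). Qed.

Unset Implicit Arguments.
Theorem lemma3p12 (R : realType) (V : choiceType) (nbr : V -> seq V)
    (A : set V)
    (Hgraph : simple_lf_graph nbr)
    (Hconn : connected_graph nbr)
    (Hhit : forall v : V, stopped_prob R nbr A v (fun _ => True) = 1%E)
    (x y : V) (Hx : ~ A x) (Hy : ~ A y) :
  (dTV (hitting_law R nbr A x) (hitting_law R nbr A y)
   <= 1 - stopped_prob R nbr A x
            (fun p => disconnects nbr (fun z => z \in x :: p) y A))%E.
Proof.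
rewrite /dTV; apply: ge_ereal_sup => _ [B _ <-].
set D := (fun p => disconnects nbr (fun z => z \in x :: p) y A).
have HD B' p : hitting_path nbr A x p -> D p ->
    exists2 z, z \in x :: p & hitting_law R nbr A z B' <= hitting_law R nbr A y B'.
  by move=> _ Dp; apply: min_lemma.
have F B' : hitting_law R nbr A x B' =
    stopped_prob R nbr A x (fun p => B' (last x p) /\ D p) +
    stopped_prob R nbr A x (fun p => B' (last x p) /\ ~ D p).
  rewrite sp_add; last by move=> p [[_ ?] [_ ?]].
  apply: sp_ext => p _; split => [b|[[]|[]]] //.
  by case: (pselect (D p)) => ?; [left|right].
have G B' : stopped_prob R nbr A x (fun p => B' (last x p) /\ ~ D p) +
    stopped_prob R nbr A x D <= 1.
  by rewrite sp_add; [exact: sp_le1 | move=> p [[_ ?] ?]].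
have K := fun B' => key Hhit (HD B').
have T v : hitting_law R nbr A v B + hitting_law R nbr A v (~` B) = 1.
  rewrite /hitting_law sp_add; last by move=> p [].
  rewrite -(Hhit v); apply: sp_ext => p _; split => // _.
  by case: (pselect (B (last v p))) => ?; [left|right].
apply: (arith_e _ _ _ _ _ _ _ _ _ (F B) (G B) (K B) (F (~` B)) (G (~` B))
  (K (~` B)) (T x) (T y)).
all: exact: (sp_finnum Hhit).
Qed.
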